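(* Let $A$ be a finite set of alternatives with $|A|\ge 3$ and let $\mathbb{D}$ be a domain of linear orders over $A$ that is connected with two distinct neighbours. Then $\mathbb{D}$ is connected and satisfies the disagreement property: for any alternatives $a,b$ such that $r_1(P_i)=a$ and $r_1(P_i')=b$ for some adjacent $P_i,P_i'\in\mathbb{D}$, there exist $\bar P_i,\hat P_i\in\mathbb{D}$ with $r_1(\bar P_i),r_1(\hat P_i)\notin\{a,b\}$, $a\,\bar P_i\,b$ and $b\,\hat P_i\,a$.
   Context: A domain is a set $\mathbb{D}$ of linear orders over $A$; $r_k(P_i)$ denotes the $k$-th ranked alternative of $P_i$, and $x\,P_i\,y$ means $P_i$ ranks $x$ above $y$. Two linear orders $P_i,P_i'$ are adjacent if $P_i'$ is obtained from $P_i$ by swapping two consecutively ranked alternatives, leaving all other ranks unchanged. A path in $\mathbb{D}$ is a sequence of distinct preferences in $\mathbb{D}$ with consecutive ones adjacent; $\mathbb{D}$ is connected if any two of its elements are joined by a path in $\mathbb{D}$. For $\bar{\mathbb{D}}\subseteq\mathbb{D}$, a neighbour of $\bar{\mathbb{D}}$ in $\mathbb{D}$ is a $P_i\in\mathbb{D}\setminus\bar{\mathbb{D}}$ adjacent to some element of $\bar{\mathbb{D}}$. $P_i,P_i'\in\mathbb{D}$ are top-connected if some path in $\mathbb{D}$ from $P_i$ to $P_i'$ has all members with the same top alternative; $\mathbb{D}^{TCC}(P_i)$ is the set of elements of $\mathbb{D}$ top-connected to $P_i$, together with $P_i$. $\mathbb{D}$ is connected with two distinct neighbours if it is connected and for every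 $P_i\in\mathbb{D}$ there exist neighbours $P_i',P_i''$ of $\mathbb{D}^{TCC}(P_i)$ in $\mathbb{D}$ with $r_1(P_i')\ne r_1(P_i'')$. *)

(* Defs.v *)
From mathcomp Require Import all_boot.
Set Implicit Arguments. Unset Strict Implicit. Unset Printing Implicit Defensive.

Section Prefs.
Variable A : finType.

(* A linear order over A is represented by its ranking list: the sequence
   r_1(P), r_2(P), ..., r_|A|(P), i.e. a permutation of all elements of A. *)
Definition linorder (P : seq A) : Prop := perm_eq P (enum A).

Definition top (P : seq A) : option A := ohead P.

Definition prefers (P : seq A) (x y : A) : Prop := index x P < index y P.

Definition adjacent (P Q : seq A) : Prop :=
  exists (l r : seq A) (x y : A), P = l ++ x :: y :: r /\ Q = l ++ y :: x :: r.

Fixpoint adj_chain (p : seq (seq A)) : Prop :=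
  match p with
  | x :: ((y :: _) as q) => adjacent x y /\ adj_chain q
  | _ => True
  end.

Definition dpath (D : seq A -> Prop) (P : seq A) (p : seq (seq A)) (Q : seq A)
  : Prop :=
  uniq (P :: p) /\ (forall R, R \in P :: p -> D R) /\ adj_chain (P :: p)
  /\ last P p = Q.

Definition connected (D : seq A -> Prop) : Prop :=
  forall P Q, D P -> D Q -> exists p, dpath D P p Q.

Definition top_connected (D : seq A -> Prop) (P Q : seq A) : Prop :=
  exists p, dpath D P p Q /\ (forall R, R \in P :: p -> top R = top P).

Definition TCC (D : seq A -> Prop) (P : seq A) : seq A -> Prop :=
  fun R => R = P \/ top_connected D P R.

Definition neighbour (D S : seq A -> Prop) (R : seq A) : Prop :=
  D R /\ ~ S R /\ exists R', S R' /\ adjacent R' R.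

Definition connected_two_neighbours (D : seq A -> Prop) : Prop :=
  connected D /\
  forall P, D P -> exists P' P'',
    neighbour D (TCC D P) P' /\ neighbour D (TCC D P) P'' /\ top P' <> top P''.

End Prefs.

(* Main.v *)
Require Import Defs.
From mathcomp Require Import all_boot.

Section Aux.
Variable A : finType.

Lemma adj_chain_prefix (s1 s2 : seq (seq A)) : adj_chain (s1 ++ s2) -> adj_chain s1.
Proof.
elim: s1 => [|x s1 IH] //=.
case: s1 IH => [|y s1] IH //=.
by case=> H1 H2; split => //; apply: IH.
Qed.

Lemma adj_chain_rcons (P : seq A) p R :
  adj_chain (P :: p) -> adjacent (last P p) R -> adj_chain (P :: rcons p R).
Proof.
elim: p P => [|y p IH] P /=; first by [].
by case=> H1 H2 H3; split => //; apply: IH.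
Qed.

Lemma extend (D : seq A -> Prop) P p Q R :
  dpath D P p Q -> (forall S, S \in P :: p -> top S = top P) ->
  D R -> adjacent Q R -> top R = top P -> top_connected D P R.
Proof.
case=> [Hu [HD [Hc Hl]]] Ht DR adj tR.
case: (boolP (R \in P :: p)) => Rin.
  rewrite in_cons in Rin; case/orP: Rin => [/eqP ->|Rin].
    exists [::]; split => //; last by move=> S; rewrite inE => /eqP ->.
    split => //; split => //; first by move=> S; rewrite inE => /eqP ->; apply: HD; rewrite inE eqxx.
  move: Hu HD Hc Ht; case/splitPr: Rin => p1 p2 Hu HD Hc Ht.
  exists (rcons p1 R); split; last first.
    by move=> S Sin; apply: Ht; move: Sin; rewrite -cat_rcons -cat_cons mem_cat => ->.
  split; first by move: Hu; rewrite -cat_rcons -cat_cons cat_uniq => /andP [].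
  split; first by move=> S Sin; apply: HD; move: Sin; rewrite -cat_rcons -cat_cons mem_cat => ->.
  split; last by rewrite last_rcons.
  by move: Hc; rewrite -cat_rcons -cat_cons => /adj_chain_prefix.
exists (rcons p R); split; last first.
  move=> S; rewrite -rcons_cons mem_rcons inE => /orP [/eqP ->|]; [exact: tR|apply: Ht].
split; first by rewrite -rcons_cons rcons_uniq Rin.
split; first by move=> S; rewrite -rcons_cons mem_rcons inE => /orP [/eqP ->|]; [exact: DR|apply: HD].
split; last by rewrite last_rcons.
by apply: adj_chain_rcons => //; rewrite Hl.
Qed.

Lemma neigh_shape (D : seq A -> Prop) P a R :
  D P -> top P = Some a -> neighbour D (TCC D P) R ->
  exists y r, y <> a /\ R = y :: a :: r.
Proof.
move=> DP tP [DR [nT [R' [TR' adj]]]].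
have [p [Hp Ht]] : exists p, dpath D P p R' /\ (forall S, S \in P :: p -> top S = top P).
  case: TR' => [->|//].
  exists [::]; split; last by move=> S; rewrite inE => /eqP ->.
  split => //; split => //; by move=> S; rewrite inE => /eqP ->.
have tR'P : top R' = top P.
  apply: Ht; case: Hp => _ [_ [_ <-]]; exact: mem_last.
have ntR : top R <> top P.
  by move=> E; apply: nT; right; exact: (extend D P p R' R Hp Ht DR adj E).
case: adj => [l [r [x [y [E1 E2]]]]].
move: tR'P ntR; rewrite E1 E2; case: l E1 E2 => [|z l] _ _ /=; last by move=> ->.
rewrite tP /top /= => [[->]] ne; exists y, r; split => //.
by move=> E; apply: ne; rewrite E.
Qed.

End Aux.

Theorem mainTheorem6 (A : finType) (D : seq A -> Prop) :
  3 <= #|A| ->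
  (forall P, D P -> linorder P) ->
  connected_two_neighbours D ->
  connected D /\
  (forall (a b : A) (P P' : seq A),
     D P -> D P' -> adjacent P P' -> top P = Some a -> top P' = Some b ->
     a <> b ->
     exists Pb Ph : seq A,
       D Pb /\ D Ph /\
       top Pb <> Some a /\ top Pb <> Some b /\
       top Ph <> Some a /\ top Ph <> Some b /\
       prefers Pb a b /\ prefers Ph b a).
Proof.
move=> _ _ [Hcon H2]; split => // a b P P' DP DP' _ tP tP' ab.
have key : forall P a b, D P -> top P = Some a -> a <> b ->
   exists R, D R /\ top R <> Some a /\ top R <> Some b /\ prefers R a b.
  move=> Q c d DQ tQ cd.
  have [R1 [R2 [N1 [N2 ne]]]] := H2 Q DQ.
  have pick : forall R, neighbour D (TCC D Q) R -> top R <> Some d ->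
      exists R, D R /\ top R <> Some c /\ top R <> Some d /\ prefers R c d.
    move=> R NR tRd; have [y [r [yc ER]]] := @neigh_shape _ D Q c R DQ tQ NR.
    exists R; split; first by case: NR.
    move: tRd; rewrite ER /top /= => yd.
    split; first by case.
    split => //.
    rewrite /prefers /= .
    have -> : (y == c) = false by apply/eqP.
    rewrite eqxx.
    have -> : (y == d) = false by apply/eqP => E; apply: yd; rewrite E.
    have -> : (c == d) = false by apply/eqP.
    by [].
  case: (eqVneq (top R1) (Some d)) => [E|E]; last by apply: (pick R1 N1); apply/eqP.
  apply: (pick R2) => // E2; apply: ne; by rewrite E E2.
have [Pb [? [? [? ?]]]] := key P a b DP tP ab.
have [Ph [? [? [? ?]]]] := key P' b a DP' tP' (fun E => ab (esym E)).
by exists Pb, Ph.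
Qed.
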